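(* Let $p_1,p_2,p_3\in\mathbb C$ be non-collinear with $|p_1-p_3|=1$, $|p_2-p_1|\le1$, $|p_2-p_3|\le1$, and let $\delta>0$ be twice the area of the triangle with vertices $p_1,p_2,p_3$. Write $p_j=re^{i\theta_j}$ with a common $r>0$ (the circumradius, after translating the circumcenter to $0$). For $\theta\in\mathbb R$ let $c_j(\theta)=r\cos(\theta_j-\theta)$. On any open interval of $\theta$ on which the labeling satisfies $c_1(\theta)\le c_2(\theta)\le c_3(\theta)$ (after a fixed permutation of indices), the function $t(\theta)=\frac{c_2(\theta)-c_1(\theta)}{c_3(\theta)-c_1(\theta)}$ is differentiable and satisfies $$\delta\le\Big|\frac{dt}{d\theta}\Big|\le\delta^{-1}.$$ *)

(* Defs.v *)
From Stdlib Require Import Reals.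
Open Scope R_scope.

Inductive idx : Set := I1 | I2 | I3.

Definition pdist (x y : idx -> R) (i j : idx) : R :=
  sqrt ((x i - x j)^2 + (y i - y j)^2).

(* Signed cross product (p2 - p1) x (p3 - p1): twice the signed area. *)
Definition cross (x y : idx -> R) : R :=
  (x I2 - x I1) * (y I3 - y I1) - (x I3 - x I1) * (y I2 - y I1).

Definition delta (x y : idx -> R) : R := Rabs (cross x y).

Definition cfun (r : R) (th : idx -> R) (j : idx) (t : R) : R :=
  r * cos (th j - t).

Definition tfun (r : R) (th : idx -> R) (i j k : idx) (t : R) : R :=
  (cfun r th j t - cfun r th i t) / (cfun r th k t - cfun r th i t).

(* Main.v *)
Require Import Defs.
From Stdlib Require Import Reals Lra Psatz.
Open Scope R_scope.
Lemma dcfun r th j t : derivable_pt_lim (cfun r th j) t (r * sin (th j - t)).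
Proof.
  unfold cfun.
  assert (Hl : derivable_pt_lim (fun u => th j - u) t (0 - 1)).
  { apply (derivable_pt_lim_minus (fct_cte (th j)) id).
    apply derivable_pt_lim_const. apply derivable_pt_lim_id. }
  assert (Hc := derivable_pt_lim_comp _ cos _ _ _ Hl (derivable_pt_lim_cos (th j - t))).
  assert (Hs := derivable_pt_lim_scal _ r _ _ Hc).
  replace (r * sin (th j - t)) with (r * (- sin (th j - t) * (0 - 1))) by ring.
  exact Hs.
Qed.

Definition crossg (x y : idx -> R) i j k :=
  (x j - x i) * (y k - y i) - (x k - x i) * (y j - y i).

Lemma crossg_delta x y i j k : i <> j -> j <> k -> i <> k ->
  Rabs (crossg x y i j k) = delta x y.
Proof.
  intros; unfold delta, cross, crossg;
  destruct i, j, k; try congruence;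
  first [f_equal; ring | rewrite <- Rabs_Ropp; f_equal; ring].
Qed.

Definition q (x y : idx -> R) i j := (x i - x j)^2 + (y i - y j)^2.

Lemma sqrt_le1 z : sqrt z <= 1 -> z <= 1.
Proof.
  intros H. destruct (Rle_dec 0 z) as [H0|H0]; [|lra].
  rewrite <- (sqrt_sqrt z H0). pose proof (sqrt_pos z). nra.
Qed.

Lemma q_le x y : pdist x y I1 I3 = 1 -> pdist x y I2 I1 <= 1 ->
  pdist x y I2 I3 <= 1 -> forall i j, q x y i j <= 1.
Proof.
  unfold pdist; intros H1 H2 H3.
  assert (A1 := sqrt_le1 _ (Req_le _ _ H1)).
  apply sqrt_le1 in H2. apply sqrt_le1 in H3.
  assert (S : forall i j, q x y i j = q x y j i) by (intros; unfold q; ring).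
  intros i j; destruct i, j;
  first [ exact A1 | exact H2 | exact H3 | rewrite S; first [exact A1 | exact H2 | exact H3]
        | unfold q; lra ].
Qed.

Theorem mainTheorem14 (x y th : idx -> R) (a b r : R) :
  0 < r ->
  (forall j, x j = a + r * cos (th j) /\ y j = b + r * sin (th j)) ->
  cross x y <> 0 ->
  pdist x y I1 I3 = 1 ->
  pdist x y I2 I1 <= 1 ->
  pdist x y I2 I3 <= 1 ->
  forall i j k : idx, i <> j -> j <> k -> i <> k ->
  forall lo hi : R, lo < hi ->
  (forall t, lo < t < hi ->
     cfun r th i t <= cfun r th j t <= cfun r th k t) ->
  forall t, lo < t < hi ->
    exists l, derivable_pt_lim (tfun r th i j k) t l /\
      delta x y <= Rabs l <= / delta x y.
Proof.
  intros Hr Hxy Hcr H13 H21 H23 i j k Hij Hjk Hik lo hi Hlh Hord t Ht.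
  pose proof (q_le x y H13 H21 H23) as Hq.
  set (c := cos t). set (s := sin t).
  assert (Hcs : c^2 + s^2 = 1) by (unfold c, s; rewrite <- (sin2_cos2 t); unfold Rsqr; ring).
  assert (HC : forall m, cfun r th m t = (x m - a) * c + (y m - b) * s).
  { intros m; unfold cfun; rewrite cos_minus; destruct (Hxy m) as [E1 E2];
    rewrite E1, E2; unfold c, s; ring. }
  assert (HD : forall m, r * sin (th m - t) = (y m - b) * c - (x m - a) * s).
  { intros m; rewrite sin_minus; destruct (Hxy m) as [E1 E2];
    rewrite E1, E2; unfold c, s; ring. }
  assert (Hdp : 0 < delta x y) by (unfold delta; apply Rabs_pos_lt; exact Hcr).
  pose proof (crossg_delta x y i j k Hij Hjk Hik) as Hcg.
  specialize (Hord t Ht). rewrite !HC in Hord.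
  set (ax := x j - x i). set (ay := y j - y i). set (bx := x k - x i). set (by_ := y k - y i).
  set (Ua := ax * c + ay * s). set (Va := ay * c - ax * s).
  set (D := bx * c + by_ * s). set (Vb := by_ * c - bx * s).
  assert (HUa : 0 <= Ua /\ Ua <= D) by (unfold Ua, D, ax, ay, bx, by_; lra).
  assert (Na : Ua^2 + Va^2 <= 1).
  { replace (Ua^2 + Va^2) with ((ax^2+ay^2)*(c^2+s^2)) by (unfold Ua, Va; ring).
    rewrite Hcs. specialize (Hq j i). unfold q in Hq. fold ax ay in Hq. lra. }
  assert (Nb : D^2 + Vb^2 <= 1).
  { replace (D^2 + Vb^2) with ((bx^2+by_^2)*(c^2+s^2)) by (unfold D, Vb; ring).
    rewrite Hcs. specialize (Hq k i). unfold q in Hq. fold bx by_ in Hq. lra. }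
  assert (Nab : (D - Ua)^2 + (Vb - Va)^2 <= 1).
  { replace ((D - Ua)^2 + (Vb - Va)^2) with (((bx-ax)^2+(by_-ay)^2)*(c^2+s^2))
      by (unfold D, Vb, Ua, Va; ring).
    rewrite Hcs. specialize (Hq k j). unfold q in Hq.
    replace (bx - ax) with (x k - x j) by (unfold bx, ax; ring).
    replace (by_ - ay) with (y k - y j) by (unfold by_, ay; ring). lra. }
  assert (Hcross : Va * D - Ua * Vb = - crossg x y i j k).
  { assert (E : Va * D - Ua * Vb = (ay*bx - ax*by_)*(c^2+s^2)) by (unfold Va, D, Ua, Vb; ring).
    rewrite E, Hcs. unfold crossg; fold ax ay bx by_; ring. }
  assert (HVa : Rabs Va <= 1).
  { apply Rabs_le; nra. }
  assert (HVba : Rabs (Vb - Va) <= 1).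
  { apply Rabs_le; nra. }
  assert (Hlow : delta x y <= D).
  { rewrite <- Hcg.
    replace (crossg x y i j k) with (- ((D - Ua) * Va + Ua * (-(Vb - Va)))) by (rewrite <- (Ropp_involutive (crossg x y i j k)), <- Hcross; ring).
    rewrite Rabs_Ropp.
    eapply Rle_trans. apply Rabs_triang.
    rewrite !Rabs_mult, Rabs_Ropp, (Rabs_pos_eq (D - Ua)) by lra.
    rewrite (Rabs_pos_eq Ua) by lra.
    assert ((D - Ua) * Rabs Va <= (D - Ua) * 1) by (apply Rmult_le_compat_l; lra).
    assert (Ua * Rabs (Vb - Va) <= Ua * 1) by (apply Rmult_le_compat_l; lra).
    lra. }
  assert (Hup : D <= 1) by nra.
  assert (HDpos : 0 < D) by lra.
  exists ((Va * D - Vb * Ua) / D^2).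
  split.
  - unfold tfun.
    assert (H1 := derivable_pt_lim_minus _ _ _ _ _ (dcfun r th j t) (dcfun r th i t)).
    assert (H2 := derivable_pt_lim_minus _ _ _ _ _ (dcfun r th k t) (dcfun r th i t)).
    assert (Hne : (cfun r th k - cfun r th i)%F t <> 0).
    { unfold minus_fct. rewrite !HC. unfold D, bx, by_ in HDpos. lra. }
    assert (H3 := derivable_pt_lim_div _ _ _ _ _ H1 H2 Hne).
    unfold minus_fct in H3. rewrite !HC, !HD in H3.
    replace ((Va * D - Vb * Ua) / D ^ 2) with
      ((((y j - b) * c - (x j - a) * s - ((y i - b) * c - (x i - a) * s)) *
      ((x k - a) * c + (y k - b) * s - ((x i - a) * c + (y i - b) * s)) -
      ((y k - b) * c - (x k - a) * s - ((y i - b) * c - (x i - a) * s)) *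
      ((x j - a) * c + (y j - b) * s - ((x i - a) * c + (y i - b) * s))) /
     ((x k - a) * c + (y k - b) * s - ((x i - a) * c + (y i - b) * s))²).
    exact H3.
    unfold Rsqr, Va, D, Vb, Ua, ax, ay, bx, by_. f_equal; ring.
  - replace (Va * D - Vb * Ua) with (- crossg x y i j k) by lra.
    unfold Rdiv. rewrite Rabs_mult, Rabs_Ropp, Hcg.
    rewrite Rabs_inv, (Rabs_pos_eq (D^2)) by nra.
    assert (HD2 : 0 < D^2) by nra.
    assert (HD21 : D^2 <= 1) by nra.
    assert (Hdd : delta x y ^2 <= D^2) by (pose proof (Rabs_pos (crossg x y i j k)); nra).
    split.
    + assert (1 <= / D^2).
      { rewrite <- Rinv_1. apply Rinv_le_contravar; lra. }
      nra.
    + apply (Rmult_le_reg_r (delta x y * D^2)). nra.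
      field_simplify; try lra.
Qed.
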